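(* Let $q=2^m$, let $k\in\mathbb{F}_q$ with $Tr(k)=1$, let $i\in\mathbb{F}_{q^2}\setminus\mathbb{F}_q$ with $i^2=i+k$, and let $\alpha=A+iB$, $\beta=C+iD$ with $A,B,C,D\in\mathbb{F}_q$ and $\alpha\beta\neq 0$. Then the following are equivalent: (i) $A=\xi^2+\xi$, $B=D=0$, $C=\xi^2$ for some $\xi\in\mathbb{F}_q\setminus\{0,1\}$ with $Tr(\xi/(\xi+1))=0$; (ii) $\beta(1+\alpha^{q+1}+\beta^{q+1})+\alpha^{2q}=0$, $\beta^{q+1}\neq 1$, $Tr\left(\frac{\beta^{q+1}}{\alpha^{q+1}}\right)=0$, and $\beta\in\mathbb{F}_q$.
   Context: $Tr:\mathbb{F}_q\to\mathbb{F}_2$ is the absolute trace $Tr(z)=z+z^2+\cdots+z^{2^{m-1}}$. *)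

(* Defs.v *)
From HB Require Import structures.
From mathcomp Require Import all_boot all_order all_algebra all_field.
Set Implicit Arguments. Unset Strict Implicit. Unset Printing Implicit Defensive.
Import GRing.Theory.
Local Open Scope ring_scope.

(* L plays the role of F_{q^2}, q = 2^m; F_q is the subfield {x | x^q = x}. *)

Definition inFq (L : finFieldType) (m : nat) (x : L) : bool := x ^+ (2 ^ m) == x.

Definition Tr (L : finFieldType) (m : nat) (z : L) : L := \sum_(j < m) z ^+ (2 ^ j).

(* Main.v *)
Require Import Defs.
From HB Require Import structures.
From mathcomp Require Import all_boot all_order all_algebra all_field.
From mathcomp Require Import ring.
Import GRing.Theory.
Local Open Scope ring_scope.

Set Implicit Arguments. Unset Strict Implicit.
Section Helpers.
Variable L : finFieldType.
Hypothesis hchar : 2%N \in [pchar L].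

Lemma two0 : (2%:R : L) = 0.
Proof. exact: (pcharf0 hchar). Qed.

Lemma frobD n (x y : L) : (x + y) ^+ (2 ^ n) = x ^+ (2 ^ n) + y ^+ (2 ^ n).
Proof.
elim: n => [|n IH]; first by rewrite !expr1.
rewrite expnSr !exprM IH.
have -> : (x ^+ (2 ^ n) + y ^+ (2 ^ n)) ^+ 2 =
  (x ^+ (2 ^ n)) ^+ 2 + (y ^+ (2 ^ n)) ^+ 2 + 2%:R * (x ^+ (2 ^ n) * y ^+ (2 ^ n)) by ring.
by rewrite two0 mul0r addr0.
Qed.

Lemma sq_inj (x y : L) : x ^+ 2 = y ^+ 2 -> x = y.
Proof.
move=> h; apply/eqP; rewrite -subr_eq0 -sqrf_eq0.
have -> : (x - y) ^+ 2 = x ^+ 2 - y ^+ 2 + 2%:R * (y ^+ 2 - x * y) by ring.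
by rewrite two0 mul0r addr0 h subrr.
Qed.

Lemma opp2 (x : L) : - x = x.
Proof. exact: oppr_pchar2. Qed.

Variable m : nat.

Lemma inFqD (x y : L) : inFq m x -> inFq m y -> inFq m (x + y).
Proof. by rewrite /inFq frobD => /eqP -> /eqP ->. Qed.
Lemma inFqM (x y : L) : inFq m x -> inFq m y -> inFq m (x * y).
Proof. by rewrite /inFq exprMn => /eqP -> /eqP ->. Qed.
Lemma inFqV (x : L) : inFq m x -> inFq m x^-1.
Proof. by rewrite /inFq exprVn => /eqP ->. Qed.
Lemma inFq1 : inFq m (1 : L).
Proof. by rewrite /inFq expr1n. Qed.
Lemma inFqE (x : L) : inFq m x -> x ^+ (2 ^ m) = x.
Proof. by move/eqP. Qed.

Lemma Tr_sq (w : L) : inFq m w -> Tr m (w ^+ 2) = Tr m w.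
Proof.
move=> /eqP hw; rewrite /Tr.
case: m hw => [|n] hw; first by rewrite !big_ord0.
rewrite big_ord_recr big_ord_recl /= expr1 addrC; congr (_ + _).
  by rewrite -exprM -expnS hw.
by apply: eq_bigr => j _; rewrite -exprM -expnS.
Qed.

Lemma Tr_xi (xi : L) : inFq m xi -> xi != 0 -> xi != 1 ->
  Tr m (xi ^+ 2 * xi ^+ 2 / ((xi ^+ 2 + xi) * (xi ^+ 2 + xi))) = Tr m (xi / (xi + 1)).
Proof.
move=> hx x0 x1.
have x10 : xi + 1 != 0.
  apply: contra x1; rewrite addr_eq0 => /eqP ->; by rewrite opp2.
have -> : xi ^+ 2 * xi ^+ 2 / ((xi ^+ 2 + xi) * (xi ^+ 2 + xi)) = (xi / (xi + 1)) ^+ 2.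
  field; rewrite x10 /=; have -> : xi ^+ 2 + xi = xi * (xi + 1) by ring.
  by rewrite mulf_neq0.
apply: Tr_sq; apply: inFqM => //; apply: inFqV; apply: inFqD => //; exact: inFq1.
Qed.

End Helpers.
Unset Implicit Arguments. Set Strict Implicit.

Theorem proposition2 (L : finFieldType) (m : nat)
  (hchar : 2%N \in [pchar L]) (hcard : #|L| = (2 ^ m * 2 ^ m)%N)
  (k i A B C D : L)
  (hk : inFq m k) (trk : Tr m k = 1)
  (hiFq : ~~ inFq m i) (hi2 : i ^+ 2 = i + k)
  (hA : inFq m A) (hB : inFq m B) (hC : inFq m C) (hD : inFq m D) :
  let q := (2 ^ m)%N in
  let alpha := A + i * B in
  let beta := C + i * D in
  alpha * beta != 0 ->
  ((exists xi : L, [/\ inFq m xi, xi != 0, xi != 1 & Tr m (xi / (xi + 1)) = 0]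
                   /\ [/\ A = xi ^+ 2 + xi, B = 0, D = 0 & C = xi ^+ 2])
   <->
   [/\ beta * (1 + alpha ^+ q.+1 + beta ^+ q.+1) + alpha ^+ (2 * q) = 0,
       beta ^+ q.+1 != 1,
       Tr m (beta ^+ q.+1 / alpha ^+ q.+1) = 0
     & inFq m beta]).
Proof.
move=> q alpha beta hab.
have two := two0 hchar.
have inv (x : L) : (x ^+ q) ^+ q = x by rewrite -exprM -hcard expf_card.
have hiq : i ^+ q = i + 1.
  set j := i ^+ q.
  have hj2 : j ^+ 2 = j + k by rewrite /j exprAC hi2 (frobD hchar) (inFqE hk).
  have e : (j + i) * (j + i + 1) = 0.
    have -> : (j + i) * (j + i + 1) = j ^+ 2 + i ^+ 2 + j + i + 2%:R * (j * i) by ring.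
    rewrite hj2 hi2 two mul0r addr0.
    have -> : j + k + (i + k) + j + i = 2%:R * (j + k + i) by ring.
    by rewrite two mul0r.
  move/eqP: e; rewrite mulf_eq0 => /orP [].
    rewrite addr_eq0 (opp2 hchar) => /eqP hji; by rewrite /inFq -/q -/j hji eqxx in hiFq.
  by rewrite -addrA addr_eq0 (opp2 hchar) => /eqP.
have conj (x y : L) : inFq m x -> inFq m y -> (x + i * y) ^+ q = x + y + i * y.
  move=> hx hy; rewrite (frobD hchar) exprMn hiq (inFqE hx) (inFqE hy); ring.
have sqq (x : L) : inFq m x -> x ^+ q.+1 = x * x by move=> hx; rewrite exprS (inFqE hx).
have sq2q (x : L) : inFq m x -> x ^+ (2 * q) = x ^+ 2 by move=> hx; rewrite mulnC exprM (inFqE hx).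
split.
  move=> [xi [[hx x0 x1 htr] [eA eB eD eC]]].
  rewrite /alpha /beta in hab *; subst A B C D; rewrite !mulr0 !addr0 in hab *.
  have hc : inFq m (xi ^+ 2) by apply: inFqM.
  have ha : inFq m (xi ^+ 2 + xi) by apply: inFqD.
  rewrite (sqq _ hc) (sq2q _ ha) (sqq _ ha); split => //.
  - have -> : xi ^+ 2 * (1 + (xi ^+ 2 + xi) * (xi ^+ 2 + xi) + xi ^+ 2 * xi ^+ 2) + (xi ^+ 2 + xi) ^+ 2
       = 2%:R * (xi ^+ 2 + xi ^+ 4 + xi ^+ 6 + xi ^+ 5 + xi ^+ 3) by ring.
    by rewrite two mul0r.
  - apply/negP => /eqP h4.
    have : (xi + 1) ^+ (2 ^ 2) = 0.
      rewrite (frobD hchar) expr1n -h4 -exprD; rewrite -[X in _ + X = 0](opp2 hchar) ; exact: subrr.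
    move/eqP; rewrite expf_eq0 /= addr_eq0 (opp2 hchar) => /eqP e1; by rewrite e1 eqxx in x1.
  - by rewrite Tr_xi.
move=> [E hb1 htr hbF].
have eD : D = 0.
  have h := inFqE hbF; rewrite /beta conj // in h.
  have e : D = C + D + i * D - (C + i * D) by ring.
  by rewrite e h subrr.
have ebeta : beta = C by rewrite /beta eD mulr0 addr0.
have hN : inFq m (alpha ^+ q.+1).
  by rewrite /inFq -/q exprS exprMn inv mulrC.
rewrite ebeta (sqq _ hC) in E.
move/eqP: E; rewrite addr_eq0 (opp2 hchar) => /eqP E.
have hT : inFq m (C * (1 + alpha ^+ q.+1 + C * C)).
  apply: inFqM => //; apply: (inFqD hchar); [apply: (inFqD hchar) => //; exact: inFq1 | exact: inFqM].
have e2 : (alpha ^+ 2) ^+ q = C * (1 + alpha ^+ q.+1 + C * C) by rewrite -exprM E.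
have e3 : alpha ^+ 2 = C * (1 + alpha ^+ q.+1 + C * C).
  by rewrite -[LHS]inv e2 (inFqE hT).
have hs : inFq m (alpha ^+ 2) by rewrite /inFq -/q e2 e3.
have haF : alpha ^+ q = alpha.
  apply: (sq_inj hchar); by rewrite -exprM mulnC exprM (inFqE hs).
have eB : B = 0.
  move: haF; rewrite /alpha conj // => h.
  have e : B = A + B + i * B - (A + i * B) by ring.
  by rewrite e h subrr.
have ealpha : alpha = A by rewrite /alpha eB mulr0 addr0.
rewrite ealpha (sqq _ hA) (sq2q _ hA) in E.
rewrite ebeta ealpha (sqq _ hA) (sqq _ hC) in htr.
rewrite ebeta (sqq _ hC) in hb1.
rewrite ebeta ealpha in hab.
have [n hn] : exists n, m = n.+1.
  case: (m) hiFq => [|n] h; last by exists n.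
  by rewrite /inFq expn0 expr1 eqxx in h.
pose xi := C ^+ (2 ^ n).
have hxi2 : xi ^+ 2 = C by rewrite /xi -exprM -expnSr -hn (inFqE hC).
have hxF : inFq m xi by rewrite /inFq /xi exprAC (inFqE hC).
have hC0 : C != 0 by move: hab; rewrite mulf_eq0 negb_or => /andP [].
have x0 : xi != 0.
  apply: contraNneq hC0 => e; by rewrite -hxi2 e expr2 mul0r.
have x1 : xi != 1.
  apply: contraNneq hb1 => e; by rewrite -hxi2 e expr1n mulr1.
have eA : A = xi ^+ 2 + xi.
  rewrite -hxi2 in E.
  have hz : (1 + xi ^+ 2) * (A + (xi ^+ 2 + xi)) ^+ 2 = 0.
    have -> : (1 + xi ^+ 2) * (A + (xi ^+ 2 + xi)) ^+ 2 =
      2%:R * (A ^+ 2 + (xi ^+ 4 + (1 + xi ^+ 2) * (A * xi ^+ 2 + A * xi + xi ^+ 3)))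
      + (xi ^+ 2 * (1 + A * A + xi ^+ 2 * xi ^+ 2) - A ^+ 2) by ring.
    by rewrite E subrr two mul0r addr0.
  move/eqP: hz; rewrite mulf_eq0 => /orP [].
    rewrite addr_eq0 => /eqP h1; exfalso; move/negP: x1; apply.
    apply/eqP; apply: (sq_inj hchar); by rewrite expr1n h1 (opp2 hchar).
  by rewrite sqrf_eq0 addr_eq0 (opp2 hchar) => /eqP.
exists xi; split; split => //.
by rewrite -(Tr_xi hchar hxF x0 x1) -eA hxi2.
Qed.
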